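(* Let $n,d\ge1$. Let $W=(w_{i,j})$, $\widetilde W=(\tilde w_{i,j})$ be real $n\times n$ matrices and $G,\widetilde G$ real $nd\times nd$ block matrices with $d\times d$ blocks $G_{i,j},\widetilde G_{i,j}$. Suppose there exist $f_1,\dots,f_n>0$ and $\varepsilon,\eta\ge0$ with $$\sup_{i\ne j}\Big|\frac{\tilde w_{i,j}}{f_i}-w_{i,j}\Big|\le\varepsilon,\qquad \sup_{i,j}\|\widetilde G_{i,j}-G_{i,j}\|_F\le\eta,$$ and that there is $C>0$ with $0\le w_{i,j}\le C$ for all $i,j$, $\sup_{i,j}\|G_{i,j}\|_F\le C$ and $\sup_{i,j}\|\widetilde G_{i,j}\|_F\le C$. If $\inf_i\frac1n\sum_{j\ne i}w_{i,j}>\gamma$ and $\gamma>\varepsilon$, then $$\|L_0(W,G)-L_0(\widetilde W,\widetilde G)\|_{op}\le \frac1\gamma C(\eta+\varepsilon)+\frac{\varepsilon}{\gamma(\gamma-\varepsilon)}C^2$$ and $$\|L(W,G)-L_0(\widetilde W,\widetilde G)\|_{op}\le \frac1\gamma C(\eta+\varepsilon)+\frac{\varepsilon}{\gamma(\gamma-\varepsilon)}C^2+\frac{C^2}{n\gamma}.$$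
   Context: For an $n\times n$ matrix $W=(w_{i,j})$ and an $nd\times nd$ block matrix $G$ with $d\times d$ blocks $G_{i,j}$, define $S$ as the block matrix with blocks $S_{i,j}=w_{i,j}G_{i,j}$ and $D$ as the block-diagonal matrix with diagonal blocks $D_{i,i}=\big(\sum_{j\ne i}w_{i,j}\big)\mathrm I_d$ (assumed invertible); $L(W,G):=D^{-1}S$. Further $L_0(W,G):=L(W\circ 1_{i\ne j},G)$, i.e. $L$ computed from the weight matrix obtained from $W$ by setting its diagonal entries to $0$. $\|\cdot\|_{op}$ is the largest singular value, $\|\cdot\|_F$ the Frobenius norm. *)

(* Defs.v *)
From mathcomp Require Import all_boot all_order all_algebra.
From mathcomp Require Import all_classical all_reals.
Set Implicit Arguments. Unset Strict Implicit. Unset Printing Implicit Defensive.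
Import Order.TTheory GRing.Theory Num.Theory.
Local Open Scope ring_scope.

Section Defs.
Variable R : realType.
Variables n d : nat.

(* Block decomposition of an index p : 'I_(n*d) into (block index, index
   inside the block); inverse of mxvec_index (row-major: p = i*d + a). *)
Definition unvec (p : 'I_(n * d)) : 'I_n * 'I_d :=
  enum_val (cast_ord (esym (@mxvec_cast n d)) p).

Definition blk (G : 'M[R]_(n * d)) (i j : 'I_n) : 'M[R]_d :=
  \matrix_(a < d, b < d) G (mxvec_index i a) (mxvec_index j b).

Definition frob m k (A : 'M[R]_(m, k)) : R :=
  Num.sqrt (\sum_i \sum_j A i j ^+ 2).

Definition opnorm m (A : 'M[R]_m) : R :=
  Num.sqrt (sup [set a : R | eigenvalue (A^T *m A) a]).

(* S_{i,j} = w_{i,j} G_{i,j} *)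
Definition Smat (W : 'M[R]_n) (G : 'M[R]_(n * d)) : 'M[R]_(n * d) :=
  \matrix_(p, q) (W (unvec p).1 (unvec q).1 * G p q).

(* D block diagonal with D_{i,i} = (sum_{j <> i} w_{i,j}) I_d *)
Definition Dmat (W : 'M[R]_n) : 'M[R]_(n * d) :=
  \matrix_(p, q) ((p == q)%:R * \sum_(j < n | j != (unvec p).1) W (unvec p).1 j).

Definition Lmat (W : 'M[R]_n) (G : 'M[R]_(n * d)) : 'M[R]_(n * d) :=
  invmx (Dmat W) *m Smat W G.

Definition offdiag (W : 'M[R]_n) : 'M[R]_n :=
  \matrix_(i, j) (if i == j then 0 else W i j).

Definition L0mat (W : 'M[R]_n) (G : 'M[R]_(n * d)) : 'M[R]_(n * d) :=
  Lmat (offdiag W) G.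

End Defs.

(* Main.v *)
Require Import Defs.
From mathcomp Require Import all_boot all_order all_algebra.
From mathcomp Require Import all_classical all_reals.
From mathcomp Require Import ring lra.
Import Order.TTheory GRing.Theory Num.Theory.
Local Open Scope ring_scope.
Section Gen.
Variable R : realType.
Variable T : finType.
Implicit Types (P : pred T) (x y : T -> R).

Lemma sum3 P (F1 F2 F3 : T -> R) k1 k2 k3 :
  \sum_(j | P j) (k1 * F1 j + k2 * F2 j + k3 * F3 j) =
  k1 * \sum_(j | P j) F1 j + k2 * \sum_(j | P j) F2 j + k3 * \sum_(j | P j) F3 j.
Proof. by rewrite !big_split /= !mulr_sumr. Qed.

Lemma sum_sq_ge0 P x : 0 <= \sum_(j | P j) x j ^+ 2.
Proof. by apply: sumr_ge0 => j _; rewrite sqr_ge0. Qed.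

Lemma cs P x y :
  (\sum_(j | P j) x j * y j) ^+ 2 <=
  (\sum_(j | P j) x j ^+ 2) * (\sum_(j | P j) y j ^+ 2).
Proof.
set S := \sum_(j | P j) x j * y j.
set A := \sum_(j | P j) x j ^+ 2.
set Q := \sum_(j | P j) y j ^+ 2.
have A0 : 0 <= A by apply: sum_sq_ge0.
have [Q0|Qn0] := eqVneq Q 0.
  have y0 : forall j, P j -> y j = 0.
    move=> j Pj; apply/eqP; rewrite -sqrf_eq0; apply/eqP.
    by apply: (psumr_eq0P _ Q0) => // k _; rewrite sqr_ge0.
  have -> : S = 0 by rewrite /S big1 // => j Pj; rewrite y0 // mulr0.
  by rewrite Q0 expr0n /= mulr0.
have Qp : 0 < Q by rewrite lt0r Qn0 sum_sq_ge0.
have H : 0 <= \sum_(j | P j) (x j * Q - y j * S) ^+ 2 by apply: sum_sq_ge0.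
have E : \sum_(j | P j) (x j * Q - y j * S) ^+ 2 = Q * (Q * A - S ^+ 2).
  transitivity (\sum_(j | P j) (Q^+2 * x j ^+ 2 + (- 2 * Q * S) * (x j * y j)
                   + S^+2 * y j ^+ 2)).
    by apply: eq_bigr => j _; ring.
  rewrite sum3 -/A -/S -/Q; ring.
rewrite E in H.
have : 0 <= Q * A - S ^+ 2 by rewrite -(pmulr_rge0 _ Qp).
lra.
Qed.

Lemma sum_sqrD P x y a b s : 0 <= a -> 0 <= b -> 0 <= s ->
  \sum_(j | P j) x j ^+ 2 <= a ^+ 2 * s ->
  \sum_(j | P j) y j ^+ 2 <= b ^+ 2 * s ->
  \sum_(j | P j) (x j + y j) ^+ 2 <= (a + b) ^+ 2 * s.
Proof.
move=> a0 b0 s0 hx hy.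
have hc := cs P x y.
set S := \sum_(j | P j) x j * y j in hc *.
have E : \sum_(j | P j) (x j + y j) ^+ 2 =
   \sum_(j | P j) x j ^+ 2 + 2 * S + \sum_(j | P j) y j ^+ 2.
  transitivity (\sum_(j | P j) (1 * x j ^+ 2 + 2 * (x j * y j) + 1 * y j ^+ 2)).
    by apply: eq_bigr => j _; ring.
  by rewrite sum3 !mul1r.
rewrite E.
have hx0 := sum_sq_ge0 P x; have hy0 := sum_sq_ge0 P y.
have h2 : S ^+ 2 <= (a * b * s) ^+ 2.
  apply: (le_trans hc).
  have -> : (a * b * s) ^+ 2 = (a ^+ 2 * s) * (b ^+ 2 * s) by ring.
  by apply: ler_pM.
have abs0 : 0 <= a * b * s by rewrite !mulr_ge0.
have hS : S <= a * b * s.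
  case: (lerP S (a * b * s)) => // hlt.
  have : (a * b * s) ^+ 2 < S ^+ 2 by rewrite ltr_pXn2r // ?nnegrE // ltW // (le_lt_trans abs0 hlt).
  by rewrite ltNge h2.
have -> : (a + b) ^+ 2 * s = a ^+ 2 * s + 2 * (a * b * s) + b ^+ 2 * s by ring.
lra.
Qed.

Lemma sum_constP P (c : R) : \sum_(j | P j) c = #|P|%:R * c.
Proof. by rewrite sumr_const mulr_natl. Qed.

Lemma gram P (a b : T -> R) :
  \sum_(j | P j) (a j * (\sum_(k | P k) b k) - b j * (\sum_(k | P k) a k)) ^+ 2
  <= #|P|%:R * (\sum_(j | P j) a j ^+ 2) * (\sum_(j | P j) b j ^+ 2).
Proof.
set A := \sum_(k | P k) a k; set B := \sum_(k | P k) b k.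
set Pa := \sum_(j | P j) a j ^+ 2; set Qb := \sum_(j | P j) b j ^+ 2.
set S := \sum_(j | P j) a j * b j.
pose m : R := #|P|%:R.
have E : \sum_(j | P j) (a j * B - b j * A) ^+ 2 = B^+2 * Pa - 2 * A * B * S + A ^+2 * Qb.
  transitivity (\sum_(j | P j) (B^+2 * a j ^+ 2 + (- 2 * A * B) * (a j * b j)
                   + A^+2 * b j ^+ 2)).
    by apply: eq_bigr => j _; ring.
  rewrite sum3 -/Pa -/S -/Qb; ring.
rewrite E.
have [m0|mp] := eqVneq #|P| 0%N.
  have e0 : forall F : T -> R, \sum_(j | P j) F j = 0.
    by move=> F; rewrite big_pred0 // => j; apply/negbTE; rewrite -[P j]/(j \in P) (card0_eq m0).
  by rewrite /Pa /Qb /S /m !e0 m0; lra.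
have mp' : 0 < m by rewrite /m ltr0n lt0n.
have hc := cs P (fun j => a j - A / m) (fun j => b j - B / m).
have e1 : \sum_(j | P j) (a j - A / m) ^+ 2 = Pa - A ^+ 2 / m.
  transitivity (\sum_(j | P j) (1 * a j ^+ 2 + (- 2 * A / m) * a j + (A/m)^+2 * 1)).
    by apply: eq_bigr => j _; ring.
  rewrite sum3 sum_constP -/Pa -/A -/m; field; lra.
have e2 : \sum_(j | P j) (b j - B / m) ^+ 2 = Qb - B ^+ 2 / m.
  transitivity (\sum_(j | P j) (1 * b j ^+ 2 + (- 2 * B / m) * b j + (B/m)^+2 * 1)).
    by apply: eq_bigr => j _; ring.
  rewrite sum3 sum_constP -/Qb -/B -/m; field; lra.
have e3 : \sum_(j | P j) (a j - A / m) * (b j - B / m) = S - A * B / m.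
  transitivity (\sum_(j | P j) (1 * (a j * b j) + (- B / m) * a j + (- A / m) * b j
      + (A / m * (B / m)) * 1)).
    by apply: eq_bigr => j _; ring.
  rewrite big_split /= sum3 sum_constP -/S -/A -/B -/m.
  have mn0 : m != 0 by rewrite gt_eqF. by field.
rewrite e1 e2 e3 in hc.
have hS : 0 <= m * S ^+ 2 by apply: mulr_ge0; [exact: ltW | exact: sqr_ge0].
have key : m * (S - A * B / m) ^+ 2 <= m * ((Pa - A ^+ 2 / m) * (Qb - B ^+ 2 / m)).
  by rewrite ler_pM2l.
have k1 : m * (S - A * B / m) ^+ 2 = m * S ^+ 2 - 2 * A * B * S + A^+2 * B^+2 / m.
  by field; lra.
have k2 : m * ((Pa - A ^+ 2 / m) * (Qb - B ^+ 2 / m)) =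
   m * Pa * Qb - A^+2 * Qb - B^+2 * Pa + A^+2 * B^+2 / m.
  by field; lra.
rewrite k1 k2 in key.
lra.
Qed.
Ltac pos := repeat (apply: mulr_ge0); rewrite ?sqr_ge0 ?ler0n //; try (apply: ltW; done); try lra.

Lemma row_bound P (w wt : T -> R) (fi eps C gamma : R) (n : nat) :
  0 < fi -> 0 <= eps -> (forall j, P j -> `|wt j / fi - w j| <= eps) ->
  (forall j, 0 <= w j <= C) -> gamma < n%:R^-1 * \sum_(j | P j) w j ->
  eps < gamma -> (#|P| <= n)%N -> (0 < n)%N ->
  \sum_(j | P j) (w j / (\sum_(k | P k) w k) - wt j / (\sum_(k | P k) wt k)) ^+ 2
   <= (eps / gamma + eps * C / (gamma * (gamma - eps))) ^+ 2 / n%:R.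
Proof.
move=> fi0 e0 he hw hg hge hm hn.
set D := \sum_(k | P k) w k.
pose u j := wt j / fi.
pose e j := u j - w j.
set U := \sum_(k | P k) u k.
set E := \sum_(k | P k) e k.
pose m : R := #|P|%:R.
have np : 0 < n%:R :> R by rewrite ltr0n.
have mn : m <= n%:R by rewrite /m ler_nat.
have m0 : 0 <= m by rewrite /m ler0n.
have g0 : 0 < gamma by apply: le_lt_trans hge.
have hD : n%:R * gamma < D.
  by move: hg; rewrite ltr_pdivlMl.
have DE : U = D + E by rewrite /E /U /D -big_split /=; apply: eq_bigr => j _; rewrite /e; ring.
have hE : `|E| <= m * eps.
  apply: (le_trans (ler_norm_sum _ _ _)).
  by rewrite -sum_constP; apply: ler_sum => j Pj; apply: he.
have hU : n%:R * (gamma - eps) <= U.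
  rewrite DE; move: hE; rewrite ler_norml => /andP [h1 h2].
  have : m * eps <= n%:R * eps by rewrite ler_wpM2r.
  lra.
have Dp : 0 < D by apply: lt_trans hD; rewrite mulr_gt0.
have Up : 0 < U by apply: lt_le_trans hU; rewrite mulr_gt0 // subr_gt0.
have hwt : \sum_(k | P k) wt k = fi * U.
  rewrite /U mulr_sumr; apply: eq_bigr => j _; rewrite /u; field; lra.
rewrite hwt.
have Ee : forall j, w j / D - wt j / (fi * U) = (w j * E - e j * D) / (D * U).
  move=> j; rewrite /e /u; move: (DE) Up => -> Up; field; by rewrite !gt_eqF.
under eq_bigr do rewrite Ee.
have -> : \sum_(j | P j) ((w j * E - e j * D) / (D * U)) ^+ 2 =
          (\sum_(j | P j) (w j * E - e j * D) ^+ 2) / (D * U) ^+ 2.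
  by rewrite mulr_suml; apply: eq_bigr => j _; rewrite expr_div_n.
have hG := gram P w e.
rewrite -/D -/E -/m in hG.
have hw2 : \sum_(j | P j) w j ^+ 2 <= C * D.
  rewrite /D mulr_sumr; apply: ler_sum => j _; have /andP [h1 h2] := hw j.
  by rewrite expr2 ler_wpM2r.
have he2 : \sum_(j | P j) e j ^+ 2 <= m * eps ^+ 2.
  rewrite -sum_constP; apply: ler_sum => j Pj.
  rewrite -real_normK ?num_real // ler_pXn2r ?nnegrE //; exact: he.
have DC : D <= m * C by rewrite /D -sum_constP; apply: ler_sum => j _; have /andP [h1 h2] := hw j.
set Z := \sum_(j | P j) (w j * E - e j * D) ^+ 2.
have Z0 : 0 <= Z by apply: sum_sq_ge0.
have hZ : Z <= m ^+ 2 * C * eps ^+ 2 * D.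
  apply: (le_trans hG).
  have -> : m ^+ 2 * C * eps ^+ 2 * D = m * (C * D) * (m * eps ^+ 2) by ring.
  apply: ler_pM; [by rewrite mulr_ge0 // sum_sq_ge0 | exact: sum_sq_ge0 | | exact: he2].
  by apply: ler_wpM2l.
set h := gamma - eps.
have hp : 0 < h by rewrite subr_gt0.
have C0 : 0 < C by nra.
have gC : gamma <= C by nra.
have -> : eps / gamma + eps * C / (gamma * h) = eps * (h + C) / (gamma * h).
  by field; rewrite !gt_eqF.
have DUp : 0 < (D * U) ^+ 2 by rewrite exprn_gt0 // mulr_gt0.
rewrite ler_pdivrMr //; apply: (le_trans hZ).
have -> : (eps * (h + C) / (gamma * h)) ^+ 2 / n%:R * (D * U) ^+ 2 =
   (eps ^+ 2 * (h + C) ^+ 2 * D ^+ 2 * U ^+ 2) / (n%:R * gamma ^+ 2 * h ^+ 2).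
  by field; rewrite !gt_eqF.
have den : 0 < n%:R * gamma ^+ 2 * h ^+ 2 by rewrite !mulr_gt0 // exprn_gt0.
rewrite ler_pdivlMr //.
have e20 : 0 <= eps ^+ 2 by rewrite sqr_ge0.
have s1 : m ^+ 2 <= n%:R ^+ 2 by rewrite ler_pXn2r ?nnegrE // ltW.
have s2 : C * gamma <= (h + C) ^+ 2.
  have : C * gamma <= C * (h + C) by rewrite ler_wpM2l ?(ltW C0) //; lra.
  have : C * (h + C) <= (h + C) * (h + C) by rewrite ler_wpM2r //; lra.
  rewrite expr2; lra.
have -> : m ^+ 2 * C * eps ^+ 2 * D * (n%:R * gamma ^+ 2 * h ^+ 2) =
   (eps ^+ 2 * D * (n%:R * h ^+ 2 * gamma)) * (m ^+ 2 * (C * gamma)) by ring.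
apply: (@le_trans _ _ ((eps ^+ 2 * D * (n%:R * h ^+ 2 * gamma)) * (n%:R ^+ 2 * (h + C) ^+ 2))).
  apply: ler_wpM2l; first by pos.
  apply: ler_pM => //; [by rewrite sqr_ge0 | by rewrite mulr_ge0 ?ltW].
have -> : eps ^+ 2 * D * (n%:R * h ^+ 2 * gamma) * (n%:R ^+ 2 * (h + C) ^+ 2) =
   (eps ^+ 2 * D * (h + C) ^+ 2) * ((n%:R * gamma) * (n%:R * h) ^+ 2) by ring.
have -> : eps ^+ 2 * (h + C) ^+ 2 * D ^+ 2 * U ^+ 2 =
   (eps ^+ 2 * D * (h + C) ^+ 2) * (D * U ^+ 2) by ring.
apply: ler_wpM2l; first by pos.
apply: ler_pM; [by rewrite mulr_ge0 ?ltW | exact: sqr_ge0 | exact: ltW |].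
have nh0 : 0 <= n%:R * h by pos.
by rewrite !expr2; apply: ler_pM.
Qed.
End Gen.
Section Op.
Variable R : realType.

Lemma opnorm_le N (M : 'M[R]_N) K : 0 <= K ->
  (forall x : 'rV[R]_N,
     \sum_p (\sum_q M p q * x 0 q) ^+ 2 <= K ^+ 2 * \sum_q x 0 q ^+ 2) ->
  opnorm M <= K.
Proof.
move=> K0 hM.
suff hs : sup [set a : R | eigenvalue (M^T *m M) a] <= K ^+ 2.
  rewrite /opnorm -(ger0_norm K0) -sqrtr_sqr ler_sqrt //; exact: sqr_ge0.
have [[a0 ha0]|ne] := pselect (exists a, eigenvalue (M^T *m M) a).
  apply: ge_sup; first by exists a0.
  move=> a /= /eigenvalueP [v hv vn0].
  set s := \sum_q v 0 q ^+ 2.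
  have es : (v *m v^T) 0 0 = s by rewrite mxE; apply: eq_bigr => q _; rewrite mxE expr2.
  have eM : (v *m (M^T *m M) *m v^T) 0 0 = \sum_p (\sum_q M p q * v 0 q) ^+ 2.
    rewrite mulmxA -mulmxA -[M in _ *m (M *m _)]trmxK -trmx_mul mxE.
    apply: eq_bigr => p _; rewrite !mxE expr2; congr (_ * _); 
      apply: eq_bigr => q _; rewrite !mxE; ring.
  have s0 : 0 < s.
    rewrite lt0r sum_sq_ge0 andbT; apply: contra vn0 => /eqP s0; apply/eqP.
    apply/matrixP => i q; rewrite (ord1 i) !mxE.
    apply/eqP; rewrite -sqrf_eq0; apply/eqP.
    by apply: (psumr_eq0P _ s0) => // k _; rewrite sqr_ge0.
  have e : \sum_p (\sum_q M p q * v 0 q) ^+ 2 = a * s.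
    by rewrite -eM hv -scalemxAl mxE es.
  have := hM v; rewrite e -/s => h.
  by rewrite -(ler_pM2r s0).
have -> : [set a : R | eigenvalue (M^T *m M) a]%classic = set0%classic.
  by apply/seteqP; split => a //= ha; apply: ne; exists a.
by rewrite sup0 sqr_ge0.
Qed.
Variables n d : nat.
Definition Ds (W : 'M[R]_n) (i : 'I_n) := \sum_(j < n | j != i) W i j.

Lemma unvecK (i : 'I_n) (a : 'I_d) : unvec (mxvec_index i a) = (i, a).
Proof. by rewrite /unvec /mxvec_index cast_ordK enum_rankK. Qed.

Lemma vecK (p : 'I_(n * d)) : mxvec_index (unvec p).1 (unvec p).2 = p.
Proof.
by rewrite /unvec /mxvec_index -surjective_pairing enum_valK cast_ordKV.
Qed.

Lemma sum_vec (F : 'I_(n * d) -> R) :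
  \sum_p F p = \sum_i \sum_a F (mxvec_index i a).
Proof.
rewrite pair_bigA /=.
rewrite (reindex (fun p : 'I_(n * d) => unvec p)) /=.
  by apply: eq_bigr => p _; rewrite vecK.
exists (fun ia => mxvec_index ia.1 ia.2) => [p _|[i a] _] /=.
  by rewrite vecK.
by rewrite unvecK.
Qed.

Lemma invD (W : 'M[R]_n) : (forall i, Ds W i != 0) ->
  invmx (Dmat d W) = \matrix_(p, q) ((p == q)%:R * (Ds W (unvec p).1)^-1).
Proof.
move=> hD.
set X := \matrix_(p, q) _.
have hX : Dmat d W *m X = 1%:M.
  apply/matrixP => p q; rewrite !mxE (bigD1 p) //= big1 => [|k kp].
    rewrite !mxE eqxx /= mul1r addr0 -/(Ds W (unvec p).1).
    by rewrite mulrCA mulfV ?mulr1.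
  by rewrite !mxE eq_sym (negbTE kp) mul0r mul0r.
have [uD _] := mulmx1_unit hX.
by rewrite -[X]mul1mx -(mulVmx uD) -mulmxA hX mulmx1.
Qed.

Lemma LmatE (W : 'M[R]_n) (G : 'M[R]_(n * d)) p q : (forall i, Ds W i != 0) ->
  Lmat W G p q = W (unvec p).1 (unvec q).1 * G p q / Ds W (unvec p).1.
Proof.
move=> hD; rewrite /Lmat invD // mxE (bigD1 p) //= big1 => [|k kp].
  by rewrite !mxE eqxx mul1r addr0 mulrC.
by rewrite !mxE eq_sym (negbTE kp) mul0r mul0r.
Qed.

Lemma Ds_off (W : 'M[R]_n) i : Ds (offdiag W) i = Ds W i.
Proof. by apply: eq_bigr => j ji; rewrite mxE eq_sym (negbTE ji). Qed.

Lemma L0matE (W : 'M[R]_n) (G : 'M[R]_(n * d)) p q : (forall i, Ds W i != 0) ->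
  L0mat W G p q = (if (unvec p).1 == (unvec q).1 then 0 else W (unvec p).1 (unvec q).1)
     * G p q / Ds W (unvec p).1.
Proof.
move=> hD; rewrite /L0mat LmatE; last by move=> i; rewrite Ds_off.
by rewrite Ds_off mxE.
Qed.
End Op.
Arguments Ds {R n}.
Section H.
Variable R : realType.

Lemma frob_sq m k (A : 'M[R]_(m, k)) c : frob A <= c ->
  \sum_i \sum_j A i j ^+ 2 <= c ^+ 2.
Proof.
rewrite /frob => h.
have x0 : 0 <= \sum_i \sum_j A i j ^+ 2.
  by apply: sumr_ge0 => i _; apply: sum_sq_ge0.
have c0 : 0 <= c by apply: le_trans h; apply: sqrtr_ge0.
rewrite -(sqr_sqrtr x0) ler_pXn2r ?nnegrE ?sqrtr_ge0 //.
Qed.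

Lemma frob_op N (M : 'M[R]_N) K :
  \sum_p \sum_q M p q ^+ 2 <= K ^+ 2 ->
  forall x : 'rV[R]_N,
   \sum_p (\sum_q M p q * x 0 q) ^+ 2 <= K ^+ 2 * \sum_q x 0 q ^+ 2.
Proof.
move=> h x.
apply: (@le_trans _ _ (\sum_p ((\sum_q M p q ^+ 2) * \sum_q x 0 q ^+ 2))).
  by apply: ler_sum => p _; exact: (@cs R _ (fun _ => true) (M p) (fun q => x 0 q)).
by rewrite -mulr_suml ler_wpM2r // sum_sq_ge0.
Qed.

Variables n d : nat.

Lemma nest4P (F : 'I_n -> 'I_n -> 'I_d -> 'I_d -> R) :
  \sum_i \sum_j \sum_a \sum_b F i j a b =
  \sum_(z : ('I_n * 'I_n) * ('I_d * 'I_d)) F z.1.1 z.1.2 z.2.1 z.2.2.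
Proof.
under eq_bigr => i _ do under eq_bigr => j _ do rewrite pair_bigA.
by rewrite pair_bigA pair_bigA.
Qed.

Lemma nest4_sqrD (X Y : 'I_n -> 'I_n -> 'I_d -> 'I_d -> R) a b s :
  0 <= a -> 0 <= b -> 0 <= s ->
  \sum_i \sum_j \sum_a' \sum_b' X i j a' b' ^+ 2 <= a ^+ 2 * s ->
  \sum_i \sum_j \sum_a' \sum_b' Y i j a' b' ^+ 2 <= b ^+ 2 * s ->
  \sum_i \sum_j \sum_a' \sum_b' (X i j a' b' + Y i j a' b') ^+ 2 <= (a + b) ^+ 2 * s.
Proof.
rewrite !nest4P => a0 b0 s0 hx hy.
exact: (@sum_sqrD R _ (fun _ => true) (fun z => X z.1.1 z.1.2 z.2.1 z.2.2)
   (fun z => Y z.1.1 z.1.2 z.2.1 z.2.2) a b s).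
Qed.

Lemma flat (F : 'I_(n * d) -> 'I_(n * d) -> R) :
  \sum_p \sum_q F p q =
  \sum_i \sum_j \sum_a \sum_b F (mxvec_index i a) (mxvec_index j b).
Proof.
rewrite sum_vec; apply: eq_bigr => i _.
under eq_bigr do rewrite sum_vec.
by rewrite exchange_big.
Qed.
End H.

Lemma div_le (R : realType) (w C g D : R) : 0 <= w -> w <= C -> 0 < g -> g <= D ->
  w / D <= C / g.
Proof.
move=> w0 wC g0 gD.
have D0 : 0 < D by apply: lt_le_trans gD.
apply: (@le_trans _ _ (C / D)); first by rewrite ler_wpM2r // invr_ge0 ltW.
by rewrite ler_wpM2l ?(le_trans w0 wC) // lef_pV2 // posrE.
Qed.

Ltac pos2 := repeat (first [ done | (apply: ltW; done) | lra | apply: mulr_ge0 | apply: divr_ge0 | apply: addr_ge0 | rewrite invr_ge0 | rewrite sqr_ge0 | rewrite ler0n]).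

Lemma sum_const_ord (R : realType) n (k : R) : \sum_(i < n) k = n%:R * k.
Proof. by rewrite sumr_const card_ord mulr_natl. Qed.

Theorem lemma2p3 (R : realType) (n d : nat) (W Wt : 'M[R]_n)
    (G Gt : 'M[R]_(n * d)) (f : 'I_n -> R) (eps eta C gamma : R) :
  (0 < n)%N -> (0 < d)%N ->
  (forall i, 0 < f i) -> 0 <= eps -> 0 <= eta ->
  (forall i j, i != j -> `|Wt i j / f i - W i j| <= eps) ->
  (forall i j, frob (blk Gt i j - blk G i j) <= eta) ->
  0 < C ->
  (forall i j, 0 <= W i j <= C) ->
  (forall i j, frob (blk G i j) <= C) ->
  (forall i j, frob (blk Gt i j) <= C) ->
  (forall i, gamma < n%:R^-1 * \sum_(j < n | j != i) W i j) ->
  eps < gamma ->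
  opnorm (L0mat W G - L0mat Wt Gt)
    <= gamma^-1 * C * (eta + eps) + eps / (gamma * (gamma - eps)) * C ^+ 2
  /\
  opnorm (Lmat W G - L0mat Wt Gt)
    <= gamma^-1 * C * (eta + eps) + eps / (gamma * (gamma - eps)) * C ^+ 2
       + C ^+ 2 / (n%:R * gamma).
Proof.
move=> n0 d0 fp e0 eta0 hW hG C0 hw hGb hGtb hg hge.
have g0 : 0 < gamma by apply: le_lt_trans hge.
have ge : 0 < gamma - eps by rewrite subr_gt0.
have np : 0 < n%:R :> R by rewrite ltr0n.
have hD : forall i, n%:R * gamma < Ds W i.
  by move=> i; move: (hg i); rewrite ltr_pdivlMl.
have Dp : forall i, 0 < Ds W i by move=> i; apply: lt_trans (hD i); rewrite mulr_gt0.
have Dn0 : forall i, Ds W i != 0 by move=> i; rewrite gt_eqF.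
have Dtp : forall i, 0 < Ds Wt i.
  move=> i.
  have hm : (#|[pred j : 'I_n | j != i]| <= n)%N.
    by rewrite (leq_trans (max_card _)) ?card_ord.
  apply: (@lt_le_trans _ _ (\sum_(j < n | j != i) f i * (W i j - eps))).
    rewrite -mulr_sumr sumrB (sum_constP R _ (fun j : 'I_n => j != i)).
    apply: mulr_gt0 => //.
    have : #|[pred j : 'I_n | j != i]|%:R * eps <= n%:R * eps.
      by rewrite ler_wpM2r // ler_nat.
    have := hD i; rewrite /Ds; nra.
  apply: ler_sum => j ji.
  have := hW i j; rewrite eq_sym ji => /(_ isT); rewrite ler_norml => /andP [h1 _].
  have fi := fp i.
  rewrite -ler_pdivlMl //; rewrite mulrC; lra.
have Dtn0 : forall i, Ds Wt i != 0 by move=> i; rewrite gt_eqF.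
have subE : forall (A B : 'M[R]_(n * d)) p q, (A - B) p q = A p q - B p q.
  by move=> A B p q; rewrite !mxE.
set Bd := eps / gamma + eps * C / (gamma * (gamma - eps)).
set Rb := gamma^-1 * C * (eta + eps) + eps / (gamma * (gamma - eps)) * C ^+ 2.
have RbE : Rb = C * eta / gamma + C * Bd.
  by rewrite /Rb /Bd; field; rewrite !gt_eqF.
have Bd0 : 0 <= Bd by rewrite /Bd; pos2.
have Rb0 : 0 <= Rb by rewrite RbE; apply: addr_ge0; [pos2 | exact: mulr_ge0 (ltW C0) Bd0].
have cle0 : forall i j, (W i j / Ds W i) ^+ 2 <= (C / (n%:R * gamma)) ^+ 2.
  move=> i j; have /andP [w0 wC] := hw i j.
  have hq : 0 <= W i j / Ds W i by rewrite divr_ge0 // ltW.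
  rewrite ler_pXn2r ?nnegrE //; last by rewrite divr_ge0 ?ltW // mulr_gt0.
  by apply: div_le => //; [rewrite mulr_gt0 | apply: ltW].
have cle : forall i j, (if i == j then 0 else W i j / Ds W i) ^+ 2 <= (C / (n%:R * gamma)) ^+ 2.
  move=> i j; case: eqP => _; last exact: cle0.
  by rewrite expr0n /= sqr_ge0.
have hF : \sum_p \sum_q (L0mat W G - L0mat Wt Gt) p q ^+ 2 <= Rb ^+ 2.
  rewrite flat.
  pose X i j a b := (if i == j then 0 else W i j / Ds W i) *
     (G (mxvec_index i a) (mxvec_index j b) - Gt (mxvec_index i a) (mxvec_index j b)).
  pose Y i j a b := Gt (mxvec_index i a) (mxvec_index j b) *
     (if i == j then 0 else W i j / Ds W i - Wt i j / Ds Wt i).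
  have ME : forall i j a b, (L0mat W G - L0mat Wt Gt) (mxvec_index i a) (mxvec_index j b)
     = X i j a b + Y i j a b.
    move=> i j a b; rewrite subE !L0matE // !unvecK /= /X /Y.
    by case: eqP => _; ring.
  under eq_bigr => i _ do under eq_bigr => j _ do under eq_bigr => a _ do
     under eq_bigr => b _ do rewrite ME.
  rewrite -[Rb ^+ 2]mulr1 RbE.
  apply: nest4_sqrD; [pos2 | exact: mulr_ge0 (ltW C0) Bd0 | exact: ler01 | | ].
  - apply: (@le_trans _ _ (\sum_(i < n) \sum_(j < n) (C / (n%:R * gamma)) ^+ 2 * eta ^+ 2)).
      apply: ler_sum => i _; apply: ler_sum => j _.
      have -> : \sum_a \sum_b X i j a b ^+ 2 = (if i == j then 0 else W i j / Ds W i) ^+ 2 *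
          \sum_a \sum_b (blk Gt i j - blk G i j) a b ^+ 2.
        rewrite mulr_sumr; apply: eq_bigr => a _; rewrite mulr_sumr; apply: eq_bigr => b _.
        by rewrite /X exprMn !mxE -[(G _ _ - _) ^+ 2]sqrrN opprB.
      apply: ler_pM; [exact: sqr_ge0 | | exact: cle | exact: (@frob_sq R _ _ _ _ (hG i j))].
      by apply: sumr_ge0 => a _; apply: sum_sq_ge0.
    rewrite !sum_const_ord mulr1 [X in X <= _](_ : _ = (C * eta / gamma) ^+ 2) //; field; rewrite !gt_eqF //.
  - apply: (@le_trans _ _ (\sum_(i < n) C ^+ 2 * (Bd ^+ 2 / n%:R))).
      apply: ler_sum => i _.
      apply: (@le_trans _ _ (\sum_(j < n) C ^+ 2 *
          (if i == j then 0 else W i j / Ds W i - Wt i j / Ds Wt i) ^+ 2)).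
        apply: ler_sum => j _.
        have -> : \sum_a \sum_b Y i j a b ^+ 2 =
            (if i == j then 0 else W i j / Ds W i - Wt i j / Ds Wt i) ^+ 2 *
            \sum_a \sum_b (blk Gt i j) a b ^+ 2.
          rewrite mulr_sumr; apply: eq_bigr => a _; rewrite mulr_sumr; apply: eq_bigr => b _.
          by rewrite /Y exprMn !mxE mulrC.
        rewrite [X in _ <= X]mulrC; apply: ler_wpM2l; first exact: sqr_ge0.
        exact: (@frob_sq R _ _ _ _ (hGtb i j)).
      rewrite -mulr_sumr ler_wpM2l ?sqr_ge0 //.
      have -> : \sum_(j < n) (if i == j then 0 else W i j / Ds W i - Wt i j / Ds Wt i) ^+ 2
         = \sum_(j < n | j != i) (W i j / Ds W i - Wt i j / Ds Wt i) ^+ 2.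
        rewrite [RHS]big_mkcond; apply: eq_bigr => j _; rewrite eq_sym.
        by case: eqP => //= _; rewrite expr0n.
      have hm : (#|[pred j : 'I_n | j != i]| <= n)%N.
        by rewrite (leq_trans (max_card _)) ?card_ord.
      apply: (@row_bound R _ (fun j => j != i) (W i) (Wt i) (f i) eps C gamma n) => //.
      by move=> j ji; apply: hW; rewrite eq_sym.
    rewrite sum_const_ord mulr1 [X in X <= _](_ : _ = (C * Bd) ^+ 2) //; field; rewrite !gt_eqF //.
have hM := @frob_op R _ _ _ hF.
split; first exact: (@opnorm_le R _ _ _ Rb0 hM).
set KB := C ^+ 2 / (n%:R * gamma).
have KB0 : 0 <= KB by rewrite /KB; pos2.
have hB : forall x : 'rV[R]_(n * d),
   \sum_p (\sum_q (Lmat W G - L0mat W G) p q * x 0 q) ^+ 2 <= KB ^+ 2 * \sum_q x 0 q ^+ 2.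
  move=> x; rewrite [X in X <= _]sum_vec [X in _ <= _ * X]sum_vec mulr_sumr.
  apply: ler_sum => i _.
  set c := W i i / Ds W i.
  have inner : forall a, \sum_q (Lmat W G - L0mat W G) (mxvec_index i a) q * x 0 q =
     \sum_b (c * G (mxvec_index i a) (mxvec_index i b)) * x 0 (mxvec_index i b).
    move=> a; rewrite sum_vec (bigD1 i) //=.
    rewrite [X in _ + X]big1 ?addr0 => [|j ji]; last first.
      apply: big1 => b _.
      by rewrite subE LmatE // L0matE // !unvecK /= eq_sym (negbTE ji) subrr mul0r.
    apply: eq_bigr => b _.
    by rewrite subE LmatE // L0matE // !unvecK /= eqxx /c; ring.
  under eq_bigr do rewrite inner.
  apply: (@le_trans _ _ (\sum_a ((c ^+ 2 * \sum_b G (mxvec_index i a) (mxvec_index i b) ^+ 2)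
       * \sum_b x 0 (mxvec_index i b) ^+ 2))).
    apply: ler_sum => a _.
    apply: (le_trans (@cs R _ (fun _ => true) (fun b => c * G (mxvec_index i a) (mxvec_index i b))
       (fun b => x 0 (mxvec_index i b)))).
    rewrite ler_wpM2r ?sum_sq_ge0 //.
    under eq_bigr do rewrite exprMn.
    by rewrite -mulr_sumr.
  rewrite -mulr_suml -mulr_sumr ler_wpM2r ?sum_sq_ge0 //.
  have hg2 : \sum_a \sum_b G (mxvec_index i a) (mxvec_index i b) ^+ 2 <= C ^+ 2.
    have := @frob_sq R _ _ _ _ (hGb i i).
    congr (_ <= _); apply: eq_bigr => a _; apply: eq_bigr => b _; by rewrite mxE.
  have -> : KB ^+ 2 = (C / (n%:R * gamma)) ^+ 2 * C ^+ 2.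
    by rewrite /KB; field; rewrite !gt_eqF.
  by apply: ler_pM; [exact: sqr_ge0 | by apply: sumr_ge0 => a _; apply: sum_sq_ge0 | exact: cle0 | ].
apply: (@opnorm_le R _ _ _ (addr_ge0 Rb0 KB0)) => x.
have e : forall p q, (Lmat W G - L0mat Wt Gt) p q =
    (L0mat W G - L0mat Wt Gt) p q + (Lmat W G - L0mat W G) p q.
  by move=> p q; rewrite !subE; ring.
under eq_bigr => p _ do (under eq_bigr => q _ do rewrite e mulrDl; rewrite big_split /=).
apply: (@sum_sqrD R _ (fun _ => true) _ _ Rb KB _) => //.
  by apply: sumr_ge0 => q _; apply: sqr_ge0.
Qed.
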